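(* Let $\sigma$ be an erasing $k$-block substitution with $w_\epsilon\ne 1^k$. Then $f_\sigma$ is continuous at every point of $$\mathcal C^\sigma=\mathbb I\setminus(\mathcal Q_2^0\cup\mathcal E^\sigma),$$ whose complement is countable, and consequently $f_\sigma$ is of Baire class 1. Moreover, $f_\sigma$ is left-continuous at every point of $\mathbb Q_2\setminus\{0\}$.
   Context: Notation: $\mathbb I=[0,1]$. $\mathbb Q_2$ is the set of dyadic rationals in $\mathbb I$, $\mathcal Q_2=\mathbb Q_2\setminus\{0,1\}$ and $\mathcal Q_2^0=\mathcal Q_2\cup\{0\}$. $\{0,1\}^*$ and $\{0,1\}^\omega$ denote finite and infinite binary words, and $\epsilon$ is the empty word. For a word $w$, set $0.w=\sum_i w_i2^{-i}$. For $x\in(0,1]$, $\widetilde x$ is the unique infinite binary expansion of $x$ not ending in $0^\infty$. Fix $k\ge2$. An erasing $k$-block substitution is a map $\sigma:\{0,1\}^k\to\{0,1\}^*$ with exactly one block $w_\epsilon$ such that $\sigma(w_\epsilon)=\epsilon$. It acts blockwise on infinite words and on finite words of length a multiple of $k$, by concatenating the images of consecutive $k$-blocks. The map $f_\sigma:\mathbb I\to\mathbb I$ is defined by $f_\sigma(x)=0.\sigma(\widetilde x)$ if $x\in(0,1]$ and $\widetilde x\ne w_\epsilon^\infty$, and $f_\sigma(x)=0$ if $x=0$ or $\widetilde x=w_\epsilon^\infty$. Define $\mathcal E^\sigma=\{x\in\mathbb I\cap\mathbb Q: x=0.vw_\epsilon^\infty \text{ for some } v\in\{0,1\}^{nk},\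 n\in\mathbb N_0\}$. *)

(* Defs.v *)
From Stdlib Require Import Reals Lra Lia List QArith Classical ClassicalEpsilon.
From Coquelicot Require Import Coquelicot.
Import ListNotations.
Open Scope R_scope.

(* Finite binary words: list bool; infinite binary words: nat -> bool,
   letter number i (0-indexed) carries weight 2^-(i+1). *)
Definition b2R (b : bool) : R := if b then 1 else 0.

Fixpoint fval (w : list bool) : R :=
  match w with
  | [] => 0
  | b :: w' => (b2R b + fval w') / 2
  end.

Definition ival (u : nat -> bool) : R :=
  Series (fun i => b2R (u i) / 2 ^ (S i)).

Definition is_bin_exp (x : R) (u : nat -> bool) : Prop :=
  is_series (fun i => b2R (u i) / 2 ^ (S i)) x.

Definition not_ending_in_0 (u : nat -> bool) : Prop :=
  forall N : nat, exists i : nat, (N <= i)%nat /\ u i = true.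

(* \widetilde x : the (unique, for x in (0,1]) infinite binary expansion
   of x not ending in 0^infinity *)
Definition tilde (x : R) : nat -> bool :=
  epsilon (inhabits (fun _ : nat => false))
    (fun u => is_bin_exp x u /\ not_ending_in_0 u).

Definition block (k : nat) (u : nat -> bool) (n : nat) : list bool :=
  map (fun j => u (n * k + j)%nat) (seq 0 k).

Definition sigma_prefix (k : nat) (sigma : list bool -> list bool)
    (u : nat -> bool) (n : nat) : list bool :=
  flat_map (fun m => sigma (block k u m)) (seq 0 n).

(* 0.sigma(u): value of the (possibly finite) concatenation of the block
   images, i.e. the limit of the values of its prefixes sigma(b_0...b_{n-1}) *)
Definition sigma_val (k : nat) (sigma : list bool -> list bool)
    (u : nat -> bool) : R :=
  real (Lim_seq (fun n => fval (sigma_prefix k sigma u n))).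

Definition v_winf (k : nat) (v w : list bool) (i : nat) : bool :=
  if Nat.ltb i (length v) then nth i v false
  else nth ((i - length v) mod k) w false.

Definition f_sigma (k : nat) (sigma : list bool -> list bool)
    (weps : list bool) (x : R) : R :=
  if excluded_middle_informative
       (x = 0 \/ (forall i, tilde x i = v_winf k [] weps i))
  then 0
  else sigma_val k sigma (tilde x).

Definition inI (x : R) : Prop := 0 <= x <= 1.

Definition dyadic (x : R) : Prop :=
  inI x /\ exists (m n : nat), x = INR m / 2 ^ n.

(* Q_2^0 = Q_2 \ {1} = (Q_2 \ {0,1}) \cup {0} *)
Definition dyadic0 (x : R) : Prop := dyadic x /\ x <> 1.

Definition E_sigma (k : nat) (weps : list bool) (x : R) : Prop :=
  inI x /\ (exists q : Q, x = Q2R q) /\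
  exists (v : list bool) (n : nat),
    length v = (n * k)%nat /\ x = ival (v_winf k v weps).

Definition C_sigma (k : nat) (weps : list bool) (x : R) : Prop :=
  inI x /\ ~ dyadic0 x /\ ~ E_sigma k weps x.

Definition continuous_at_in_I (f : R -> R) (x : R) : Prop :=
  forall eps : R, 0 < eps -> exists delta : R, 0 < delta /\
    forall y : R, inI y -> Rabs (y - x) < delta -> Rabs (f y - f x) < eps.

Definition left_continuous_at_in_I (f : R -> R) (x : R) : Prop :=
  forall eps : R, 0 < eps -> exists delta : R, 0 < delta /\
    forall y : R, inI y -> x - delta < y <= x -> Rabs (f y - f x) < eps.

Definition baire_class_1_on_I (f : R -> R) : Prop :=
  exists fn : nat -> R -> R,
    (forall n x, inI x -> continuous_at_in_I (fn n) x) /\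
    (forall x, inI x -> Un_cv (fun n => fn n x) (f x)).

Definition countable_set (A : R -> Prop) : Prop :=
  exists g : nat -> R, forall x, A x -> exists n, g n = x.

(* Main.v *)
Require Import Defs.
From Stdlib Require Import Reals Lra Lia ZArith List QArith Classical ClassicalEpsilon Cantor.
From Coquelicot Require Import Coquelicot.
Import ListNotations.
Open Scope R_scope.

Fixpoint pw2 (j : nat) : Z := match j with O => 1%Z | S j => (2 * pw2 j)%Z end.
Lemma pw2_IZR j : IZR (pw2 j) = 2 ^ j.
Proof. induction j; [reflexivity|]. change (pw2 (S j)) with (2 * pw2 j)%Z. rewrite mult_IZR, IHj; reflexivity. Qed.
Lemma pw2_pos j : (0 < pw2 j)%Z.
Proof. induction j; [reflexivity|]. change (pw2 (S j)) with (2 * pw2 j)%Z. lia. Qed.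
Lemma p2pos j : 0 < 2 ^ j.
Proof. apply pow_lt; lra. Qed.

Definition b2Z (b : bool) : Z := if b then 1%Z else 0%Z.
Lemma b2R_IZR b : b2R b = IZR (b2Z b).
Proof. destruct b; reflexivity. Qed.

Definition Am (m : nat) (x : R) : Z := (- up (- (2 ^ m * x)))%Z.
Lemma Am_spec m x : IZR (Am m x) < 2 ^ m * x <= IZR (Am m x) + 1.
Proof. destruct (archimed (-(2^m*x))) as [H1 H2]. unfold Am; rewrite opp_IZR; lra. Qed.
Lemma Am_uniq m x z : IZR z < 2 ^ m * x <= IZR z + 1 -> z = Am m x.
Proof.
  intros [H1 H2]. destruct (Am_spec m x) as [H3 H4].
  assert (z < Am m x + 1)%Z by (apply lt_IZR; rewrite plus_IZR; simpl; lra).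
  assert (Am m x < z + 1)%Z by (apply lt_IZR; rewrite plus_IZR; simpl; lra).
  lia.
Qed.

Definition tb (x : R) (i : nat) : bool := Z.eqb (Am (S i) x) (2 * Am i x + 1).
Lemma Am_S i x : Am (S i) x = (2 * Am i x + b2Z (tb x i))%Z.
Proof.
  destruct (Am_spec i x) as [H1 H2]. unfold tb.
  assert (E2 : 2 ^ S i * x = 2 * (2 ^ i * x)) by (simpl; ring).
  destruct (Rle_dec (2 ^ S i * x) (IZR (2 * Am i x) + 1)) as [H|H].
  - assert (E : (2 * Am i x)%Z = Am (S i) x).
    { apply Am_uniq. rewrite mult_IZR in *. split; lra. }
    rewrite <- E. replace (Z.eqb (2 * Am i x) (2 * Am i x + 1)) with false
      by (symmetry; apply Z.eqb_neq; lia). simpl; lia.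
  - assert (E : (2 * Am i x + 1)%Z = Am (S i) x).
    { apply Am_uniq. rewrite plus_IZR, mult_IZR in *. split; lra. }
    rewrite <- E, Z.eqb_refl. simpl; lia.
Qed.

Lemma Am_0 x : 0 < x <= 1 -> Am 0 x = 0%Z.
Proof. intros. symmetry; apply Am_uniq. simpl. lra. Qed.

Lemma Am_nonneg m x : 0 < x -> (0 <= Am m x)%Z.
Proof.
  intros. destruct (Am_spec m x). assert (0 < 2^m*x) by (apply Rmult_lt_0_compat; [apply p2pos|lra]).
  assert (-1 < Am m x)%Z by (apply lt_IZR; simpl; lra). lia.
Qed.

Fixpoint psum (u : nat -> bool) (m : nat) : R :=
  match m with O => 0 | S m' => psum u m' + b2R (u m') / 2 ^ (S m') end.
Fixpoint Pz (u : nat -> bool) (m : nat) : Z :=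
  match m with O => 0%Z | S m' => (2 * Pz u m' + b2Z (u m'))%Z end.

Lemma psum_Pz u m : psum u m = IZR (Pz u m) / 2 ^ m.
Proof.
  induction m; cbn [psum Pz]. unfold Rdiv; simpl; rewrite Rinv_1; ring. rewrite IHm, plus_IZR, mult_IZR, <- b2R_IZR.
  assert (0 < 2^m) by apply p2pos. simpl. field. lra.
Qed.

Lemma sum_psum u n : sum_f_R0 (fun i => b2R (u i) / 2 ^ (S i)) n = psum u (S n).
Proof. induction n; simpl in *. lra. rewrite IHn. simpl. reflexivity. Qed.

Lemma Pz_tb x m : 0 < x <= 1 -> Pz (tb x) m = Am m x.
Proof. intros Hx. induction m; cbn [Pz]. rewrite Am_0; auto. rewrite Am_S, IHm. reflexivity. Qed.

Lemma inv_pow2_small eps : 0 < eps -> exists N, / 2 ^ N < eps.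
Proof.
  intros He. destruct (archimed (/ eps)) as [H1 _].
  assert (Hz : (0 <= up (/eps))%Z).
  { assert (0 < / eps) by (apply Rinv_0_lt_compat; lra).
    assert (-1 < up (/eps))%Z by (apply lt_IZR; simpl; lra). lia. }
  exists (Z.to_nat (up (/eps))).
  assert (Hp : forall n, INR n < 2 ^ n).
  { induction n. simpl; lra. rewrite S_INR. simpl.
    assert (1 <= 2^n) by (apply pow_R1_Rle; lra). lra. }
  assert (HI : INR (Z.to_nat (up (/eps))) = IZR (up (/eps))).
  { rewrite INR_IZR_INZ, Z2Nat.id; auto. }
  specialize (Hp (Z.to_nat (up (/eps)))). rewrite HI in Hp.
  assert (0 < 2 ^ Z.to_nat (up (/eps))) by apply p2pos.
  assert (/ eps < 2 ^ Z.to_nat (up (/eps))) by lra.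
  assert (HH : / 2 ^ Z.to_nat (up (/eps)) < / / eps).
  { apply Rinv_lt_contravar; auto. apply Rmult_lt_0_compat; auto. apply Rinv_0_lt_compat; lra. }
  rewrite Rinv_inv in HH. exact HH.
Qed.

Lemma tb_exp x : 0 < x <= 1 -> is_bin_exp x (tb x).
Proof.
  intros Hx. unfold is_bin_exp. apply is_series_Reals. intros eps He.
  destruct (inv_pow2_small eps He) as [N HN]. exists N. intros n Hn.
  rewrite sum_psum, psum_Pz, Pz_tb; auto. unfold Rdist.
  destruct (Am_spec (S n) x) as [H1 H2].
  assert (Hp : 0 < 2 ^ S n) by apply p2pos.
  assert (/ 2 ^ S n <= / 2 ^ N).
  { apply Rinv_le_contravar. apply p2pos. apply Rle_pow; lia || lra. }
  assert (E : IZR (Am (S n) x) / 2 ^ S n - x = (IZR (Am (S n) x) - 2 ^ S n * x) * / 2 ^ S n) by (field; lra).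
  rewrite E, Rabs_mult, Rabs_inv, (Rabs_right (2 ^ S n)) by lra.
  assert (Rabs (IZR (Am (S n) x) - 2 ^ S n * x) <= 1) by (apply Rabs_le; lra).
  assert (0 < / 2 ^ S n) by (apply Rinv_0_lt_compat; lra).
  nra.
Qed.

Lemma Am_shift0 x N : (forall i, (N <= i)%nat -> tb x i = false) ->
  forall j, IZR (Am (N + j) x) = 2 ^ j * IZR (Am N x).
Proof.
  intros H j. induction j. rewrite Nat.add_0_r; simpl; ring.
  rewrite Nat.add_succ_r, Am_S, H by lia. cbn [b2Z].
  rewrite plus_IZR, mult_IZR, IHj. simpl. ring.
Qed.

Lemma tb_ne0 x : 0 < x <= 1 -> not_ending_in_0 (tb x).
Proof.
  intros Hx N. apply NNPP. intro Hn.
  assert (H : forall i, (N <= i)%nat -> tb x i = false).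
  { intros i Hi. destruct (tb x i) eqn:E; auto. exfalso; apply Hn; exists i; auto. }
  destruct (Am_spec N x) as [H1 H2].
  set (d := 2 ^ N * x - IZR (Am N x)).
  assert (Hd : 0 < d) by (unfold d; lra).
  destruct (inv_pow2_small d Hd) as [j Hj].
  destruct (Am_spec (N + j) x) as [_ H3].
  rewrite Am_shift0 with (N := N) in H3 by auto.
  rewrite pow_add in H3.
  assert (Hp : 0 < 2 ^ j) by apply p2pos.
  assert (2 ^ j * d <= 1) by (unfold d; nra).
  assert (/ 2 ^ j * (2 ^ j * d) <= / 2 ^ j * 1).
  { apply Rmult_le_compat_l; auto. left; apply Rinv_0_lt_compat; lra. }
  replace (/ 2 ^ j * (2 ^ j * d)) with d in H4 by (field; lra). lra.
Qed.

Lemma psum_mono u m j : psum u m <= psum u (m + j).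
Proof.
  induction j. rewrite Nat.add_0_r; lra.
  rewrite Nat.add_succ_r. cbn [psum].
  assert (0 <= b2R (u (m + j)%nat) / 2 ^ S (m + j)).
  { unfold Rdiv. apply Rmult_le_pos. destruct (u _); simpl; lra.
    left; apply Rinv_0_lt_compat, p2pos. }
  lra.
Qed.

Lemma psum_tail u m j : psum u (m + j) <= psum u m + / 2 ^ m - / 2 ^ (m + j).
Proof.
  induction j. rewrite Nat.add_0_r; lra.
  rewrite Nat.add_succ_r. cbn [psum].
  assert (Hp : 0 < 2 ^ (m + j)) by apply p2pos.
  assert (b2R (u (m + j)%nat) / 2 ^ S (m + j) <= / 2 ^ S (m + j)).
  { unfold Rdiv. rewrite <- (Rmult_1_l (/ 2 ^ S (m+j))) at 2.
    apply Rmult_le_compat_r. left; apply Rinv_0_lt_compat, p2pos. destruct (u _); simpl; lra. }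
  assert (/ 2 ^ (m + j) - / 2 ^ S (m + j) = / 2 ^ S (m + j)) by (simpl; field; lra).
  lra.
Qed.

Lemma lim_ub x u N0 c : is_bin_exp x u -> (forall n, (N0 <= n)%nat -> psum u (S n) <= c) -> x <= c.
Proof.
  intros He H. apply is_series_Reals in He. apply Rnot_lt_le; intro Hc.
  destruct (He (x - c)) as [N HN]. lra.
  specialize (HN (max N N0) ltac:(lia)). specialize (H (max N N0) ltac:(lia)).
  rewrite sum_psum in HN. unfold Rdist in HN.
  rewrite Rabs_left1 in HN; lra.
Qed.

Lemma lim_lb x u N0 c : is_bin_exp x u -> (forall n, (N0 <= n)%nat -> c <= psum u (S n)) -> c <= x.
Proof.
  intros He H. apply is_series_Reals in He. apply Rnot_lt_le; intro Hc.
  destruct (He (c - x)) as [N HN]. lra.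
  specialize (HN (max N N0) ltac:(lia)). specialize (H (max N N0) ltac:(lia)).
  rewrite sum_psum in HN. unfold Rdist in HN.
  rewrite Rabs_right in HN; lra.
Qed.

Lemma bin_exp_uniq x u : is_bin_exp x u -> not_ending_in_0 u -> forall m, Pz u m = Am m x.
Proof.
  intros He Hn m. apply Am_uniq.
  assert (Hup : x <= psum u m + / 2 ^ m).
  { apply (lim_ub x u m); auto. intros n Hn'.
    replace (S n) with (m + (S n - m))%nat by lia.
    pose proof (psum_tail u m (S n - m)).
    assert (0 < / 2 ^ (m + (S n - m))) by (apply Rinv_0_lt_compat, p2pos). lra. }
  destruct (Hn m) as [i [Hi Hui]].
  assert (Hlo : psum u m + / 2 ^ S i <= x).
  { apply (lim_lb x u i); auto. intros n Hn'.
    replace (S n) with (S i + (n - i))%nat by lia.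
    pose proof (psum_mono u (S i) (n - i)).
    cbn [psum] in *. rewrite Hui in *. simpl b2R in *.
    replace i with (m + (i - m))%nat in * by lia.
    pose proof (psum_mono u m (i - m)). unfold Rdiv in *. lra. }
  assert (0 < / 2 ^ S i) by (apply Rinv_0_lt_compat, p2pos).
  rewrite psum_Pz in Hup, Hlo.
  assert (Hp : 0 < 2 ^ m) by apply p2pos.
  assert (E1 : 2 ^ m * (IZR (Pz u m) / 2 ^ m + / 2 ^ m) = IZR (Pz u m) + 1) by (field; lra).
  assert (E2 : 2 ^ m * (IZR (Pz u m) / 2 ^ m) = IZR (Pz u m)) by (field; lra).
  split.
  - rewrite <- E2. apply Rmult_lt_compat_l; auto. lra.
  - rewrite <- E1. apply Rmult_le_compat_l; lra.
Qed.

Lemma tilde_spec x : 0 < x <= 1 -> is_bin_exp x (tilde x) /\ not_ending_in_0 (tilde x).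
Proof.
  intros Hx. unfold tilde. apply epsilon_spec. exists (tb x). split; [apply tb_exp|apply tb_ne0]; auto.
Qed.

Lemma tilde_eq x : 0 < x <= 1 -> forall i, tilde x i = tb x i.
Proof.
  intros Hx i. destruct (tilde_spec x Hx) as [H1 H2].
  pose proof (bin_exp_uniq x _ H1 H2 (S i)) as E. cbn [Pz] in E.
  rewrite bin_exp_uniq with (x := x) in E by auto. rewrite Am_S in E.
  destruct (tilde x i), (tb x i); simpl in E; auto; lia.
Qed.

Lemma Am_S_eq x y i : Am (S i) x = Am (S i) y -> Am i x = Am i y /\ tb x i = tb y i.
Proof.
  rewrite !Am_S. intros E. destruct (tb x i), (tb y i); cbn [b2Z] in E; split; auto; lia.
Qed.

Lemma Am_down x y d : forall i, Am (i + d) x = Am (i + d) y -> Am i x = Am i y.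
Proof.
  induction d; intros i E. rewrite Nat.add_0_r in E; auto.
  rewrite Nat.add_succ_r in E. apply Am_S_eq in E. apply IHd, E.
Qed.

Lemma agree x y m : Am m x = Am m y -> forall i, (i < m)%nat -> tb x i = tb y i.
Proof.
  intros E i Hi. replace m with (S i + (m - S i))%nat in E by lia.
  apply Am_down in E. apply Am_S_eq in E. tauto.
Qed.

Lemma nbhd_left x m : 0 < x <= 1 -> exists d, 0 < d /\
  forall y, x - d < y <= x -> 0 < y <= 1 /\ Am m y = Am m x.
Proof.
  intros Hx. destruct (Am_spec m x) as [H1 H2].
  assert (Hp : 0 < 2 ^ m) by apply p2pos.
  pose proof (Am_nonneg m x ltac:(lra)) as H0. apply IZR_le in H0.
  exists (x - IZR (Am m x) / 2 ^ m). split.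
  - assert (IZR (Am m x) / 2 ^ m < x).
    { apply (Rmult_lt_reg_l (2^m)); auto. replace (2^m * (IZR (Am m x) / 2^m)) with (IZR (Am m x)) by (field; lra). lra. }
    lra.
  - intros y Hy.
    assert (Hy1 : IZR (Am m x) < 2 ^ m * y).
    { replace (IZR (Am m x)) with (2^m * (IZR (Am m x) / 2^m)) by (field; lra).
      apply Rmult_lt_compat_l; lra. }
    assert (0 <= IZR (Am m x) / 2 ^ m) by (apply Rmult_le_pos; [lra|left; apply Rinv_0_lt_compat; lra]).
    split. lra. symmetry; apply Am_uniq. split; auto.
    assert (2^m * y <= 2^m * x) by (apply Rmult_le_compat_l; lra). lra.
Qed.

Lemma nbhd_two x m : 0 < x <= 1 -> (x = 1 \/ ~ dyadic x) -> exists d, 0 < d /\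
  forall y, inI y -> Rabs (y - x) < d -> 0 < y <= 1 /\ Am m y = Am m x.
Proof.
  intros Hx Hnd. destruct (nbhd_left x m Hx) as [d1 [Hd1 H1]].
  destruct Hnd as [E|Hnd].
  - exists d1. split; auto. intros y Hy Hyx. apply H1. unfold inI in Hy.
    apply Rabs_def2 in Hyx. lra.
  - destruct (Am_spec m x) as [A1 A2].
    assert (Hp : 0 < 2 ^ m) by apply p2pos.
    assert (A3 : 2 ^ m * x < IZR (Am m x) + 1).
    { destruct A2 as [A2|A2]; auto. exfalso. apply Hnd. split. unfold inI; lra.
      exists (Z.to_nat (Am m x + 1)), m. rewrite INR_IZR_INZ, Z2Nat.id.
      rewrite plus_IZR. simpl IZR. rewrite <- A2. field. lra. pose proof (Am_nonneg m x ltac:(lra)). lia. }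
    set (d2 := (IZR (Am m x) + 1) / 2 ^ m - x).
    assert (Hd2 : 0 < d2).
    { unfold d2. assert (x < (IZR (Am m x) + 1) / 2 ^ m).
      { apply (Rmult_lt_reg_l (2^m)); auto. replace (2^m * ((IZR (Am m x)+1) / 2^m)) with (IZR (Am m x)+1) by (field; lra). lra. }
      lra. }
    exists (Rmin d1 d2). split. apply Rmin_pos; auto.
    intros y Hy Hyx. apply Rabs_def2 in Hyx. destruct Hyx as [Ha Hb].
    pose proof (Rmin_l d1 d2). pose proof (Rmin_r d1 d2).
    destruct (Rle_dec y x) as [Hle|Hgt]. apply H1; lra.
    split. unfold inI in Hy; lra.
    symmetry; apply Am_uniq. split.
    + assert (2^m * x < 2^m * y) by (apply Rmult_lt_compat_l; lra). lra.
    + assert (y < (IZR (Am m x) + 1) / 2 ^ m) by (unfold d2 in *; lra).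
      assert (2^m * y < 2^m * ((IZR (Am m x) + 1) / 2 ^ m)) by (apply Rmult_lt_compat_l; lra).
      replace (2^m * ((IZR (Am m x)+1) / 2^m)) with (IZR (Am m x)+1) in H3 by (field; lra). lra.
Qed.

Lemma dyadic_bits x a L : 0 < x <= 1 -> x = INR a / 2 ^ L -> forall i, (L <= i)%nat -> tb x i = true.
Proof.
  intros Hx Ex i Hi.
  assert (Hint : forall j, (L <= j)%nat -> 2 ^ j * x = IZR (Z.of_nat a * pw2 (j - L))).
  { intros j Hj. rewrite mult_IZR, pw2_IZR, <- INR_IZR_INZ, Ex.
    replace j with (L + (j - L))%nat at 1 by lia. rewrite pow_add.
    assert (0 < 2 ^ L) by apply p2pos. field. lra. }
  assert (E1 : Am i x = (Z.of_nat a * pw2 (i - L) - 1)%Z).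
  { symmetry; apply Am_uniq. rewrite Hint by lia. rewrite minus_IZR. simpl. lra. }
  assert (E2 : Am (S i) x = (Z.of_nat a * pw2 (S i - L) - 1)%Z).
  { symmetry; apply Am_uniq. rewrite Hint by lia. rewrite minus_IZR. simpl. lra. }
  replace (S i - L)%nat with (S (i - L)) in E2 by lia.
  change (pw2 (S (i - L))) with (2 * pw2 (i - L))%Z in E2.
  pose proof (Am_S i x). rewrite E1, E2 in H.
  destruct (tb x i); cbn [b2Z] in H; auto. nia.
Qed.

Lemma fval_app a b : fval (a ++ b) = fval a + fval b / 2 ^ length a.
Proof.
  induction a; simpl. field. rewrite IHa. field. apply pow_nonzero; lra.
Qed.

Lemma fval_bounds w : 0 <= fval w <= 1.
Proof. induction w; simpl. lra. destruct a; simpl; lra. Qed.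

Definition V k sigma u n := fval (sigma_prefix k sigma u n).
Definition Ln k sigma u n := length (sigma_prefix k sigma u n).

Lemma sp_S k sigma u n : sigma_prefix k sigma u (S n) = sigma_prefix k sigma u n ++ sigma (block k u n).
Proof. unfold sigma_prefix. rewrite seq_S, flat_map_app. simpl. rewrite app_nil_r. reflexivity. Qed.

Lemma sp_add k sigma u n j : exists r, sigma_prefix k sigma u (n + j) = sigma_prefix k sigma u n ++ r.
Proof.
  induction j. exists []. rewrite Nat.add_0_r, app_nil_r; auto.
  destruct IHj as [r Hr]. exists (r ++ sigma (block k u (n + j))).
  rewrite Nat.add_succ_r, sp_S, Hr, app_assoc. reflexivity.
Qed.

Lemma V_bounds k sigma u n j : V k sigma u n <= V k sigma u (n + j) <= V k sigma u n + / 2 ^ Ln k sigma u n.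
Proof.
  unfold V, Ln. destruct (sp_add k sigma u n j) as [r Hr]. rewrite Hr, fval_app.
  pose proof (fval_bounds r). pose proof (p2pos (length (sigma_prefix k sigma u n))).
  assert (0 <= fval r / 2 ^ length (sigma_prefix k sigma u n) <= / 2 ^ length (sigma_prefix k sigma u n)).
  { unfold Rdiv. split. apply Rmult_le_pos; [lra| left; apply Rinv_0_lt_compat; lra].
    rewrite <- (Rmult_1_l (/ _)) at 2. apply Rmult_le_compat_r. left; apply Rinv_0_lt_compat; lra. lra. }
  lra.
Qed.

Lemma V_incr k sigma u n : V k sigma u n <= V k sigma u (S n).
Proof. rewrite <- Nat.add_1_r. apply V_bounds. Qed.

Lemma Ln_mono k sigma u n j : (Ln k sigma u n <= Ln k sigma u (n + j))%nat.
Proof. unfold Ln. destruct (sp_add k sigma u n j) as [r Hr]. rewrite Hr, length_app. lia. Qed.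

Lemma sv_lim k sigma u : is_lim_seq (V k sigma u) (sigma_val k sigma u).
Proof.
  pose proof (Lim_seq_correct (V k sigma u) (ex_lim_seq_incr _ (V_incr k sigma u))) as H.
  unfold sigma_val. change (fun n => fval (sigma_prefix k sigma u n)) with (V k sigma u).
  destruct (Lim_seq (V k sigma u)) eqn:E.
  - exact H.
  - exfalso. assert (Rbar_le p_infty 1).
    { apply (is_lim_seq_le (V k sigma u) (fun _ => 1)); auto. intros; apply fval_bounds. apply is_lim_seq_const. }
    simpl in H0; auto.
  - exfalso. assert (Rbar_le 0 m_infty).
    { apply (is_lim_seq_le (fun _ => 0) (V k sigma u)); auto. intros; apply fval_bounds. apply is_lim_seq_const. }
    simpl in H0; auto.
Qed.

Lemma sv_bounds k sigma u n : V k sigma u n <= sigma_val k sigma u <= V k sigma u n + / 2 ^ Ln k sigma u n.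
Proof.
  pose proof (sv_lim k sigma u). split.
  - assert (Rbar_le (V k sigma u n) (sigma_val k sigma u)).
    { apply (is_lim_seq_le_loc (fun _ => V k sigma u n) (V k sigma u)); auto.
      exists n. intros m Hm. replace m with (n + (m - n))%nat by lia. apply V_bounds.
      apply is_lim_seq_const. }
    exact H0.
  - assert (Rbar_le (sigma_val k sigma u) (V k sigma u n + / 2 ^ Ln k sigma u n)).
    { apply (is_lim_seq_le_loc (V k sigma u) (fun _ => V k sigma u n + / 2 ^ Ln k sigma u n)); auto.
      exists n. intros m Hm. replace m with (n + (m - n))%nat by lia. apply V_bounds.
      apply is_lim_seq_const. }
    exact H0.
Qed.

Lemma sv_range k sigma u : 0 <= sigma_val k sigma u <= 1.
Proof.
  pose proof (sv_bounds k sigma u 0). unfold V, Ln in H. simpl in H. lra.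
Qed.

Lemma block_ext k u u' n : (forall j, (j < k)%nat -> u (n * k + j)%nat = u' (n * k + j)%nat) ->
  block k u n = block k u' n.
Proof.
  intros H. unfold block. apply map_ext_in. intros j Hj. apply in_seq in Hj. apply H. lia.
Qed.

Lemma sp_ext k sigma u u' n : (forall i, (i < n * k)%nat -> u i = u' i) ->
  sigma_prefix k sigma u n = sigma_prefix k sigma u' n.
Proof.
  induction n; intros H. reflexivity.
  rewrite !sp_S. rewrite IHn. f_equal. f_equal. apply block_ext. intros j Hj. apply H. simpl. nia.
  intros i Hi. apply H. simpl. nia.
Qed.

Lemma block_length k u n : length (block k u n) = k.
Proof. unfold block. rewrite length_map, length_seq. reflexivity. Qed.

Lemma block_nth k u n j : (j < k)%nat -> nth j (block k u n) false = u (n * k + j)%nat.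
Proof.
  intros Hj. unfold block.
  rewrite (nth_indep _ false ((fun j => u (n * k + j)%nat) 0%nat)) by (rewrite length_map, length_seq; auto).
  rewrite (map_nth (fun j => u (n * k + j)%nat)). rewrite seq_nth by auto. reflexivity.
Qed.

Set Default Proof Using "All".
Section Sig.
Variables (k : nat) (sigma : list bool -> list bool) (weps : list bool).
Hypotheses (hk : (2 <= k)%nat) (hlen : length weps = k) (heps : sigma weps = [])
  (huniq : forall w : list bool, length w = k -> sigma w = [] -> w = weps)
  (hne : weps <> repeat true k).

Definition fs := f_sigma k sigma weps.

Lemma mod_block n j : (j < k)%nat -> ((n * k + j) mod k = j)%nat.
Proof.
  intros Hj. rewrite Nat.add_comm, Nat.mod_add by lia. apply Nat.mod_small; auto.
Qed.

Lemma weps_block n : block k (fun i => v_winf k [] weps i) n = weps.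
Proof.
  apply nth_ext with (d := false) (d' := false). rewrite block_length; auto.
  intros j Hj. rewrite block_length in Hj. rewrite block_nth by auto.
  unfold v_winf. simpl length. replace (Nat.ltb (n * k + j) 0) with false by reflexivity.
  rewrite Nat.sub_0_r, mod_block; auto.
Qed.

Lemma sp_weps n : sigma_prefix k sigma (fun i => v_winf k [] weps i) n = [].
Proof. induction n. reflexivity. rewrite sp_S, IHn, weps_block, heps. reflexivity. Qed.

Lemma FX x : x <> 0 -> fs x = sigma_val k sigma (tilde x).
Proof.
  intros Hx. unfold fs, f_sigma. destruct excluded_middle_informative as [[H|H]|H]; auto.
  - contradiction.
  - unfold sigma_val. rewrite (Lim_seq_ext _ (fun _ => 0)). rewrite Lim_seq_const. reflexivity.
    intros n. rewrite (sp_ext k sigma _ (fun i => v_winf k [] weps i)) by auto.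
    rewrite sp_weps. reflexivity.
Qed.

Lemma f0 : fs 0 = 0.
Proof. unfold fs, f_sigma. destruct excluded_middle_informative as [H|H]; auto. exfalso; apply H; auto. Qed.

Lemma f_range x : 0 <= fs x <= 1.
Proof.
  destruct (Req_dec x 0) as [E|E]. subst; rewrite f0; lra. rewrite FX by auto. apply sv_range.
Qed.

Lemma nonweps_len u n : block k u n <> weps -> (1 <= length (sigma (block k u n)))%nat.
Proof.
  intros H. destruct (sigma (block k u n)) eqn:E. exfalso; apply H, huniq; auto. apply block_length.
  simpl; lia.
Qed.

Lemma dichot u : (forall M, exists n, (M <= Ln k sigma u n)%nat) \/
  (exists N, forall n, (N <= n)%nat -> block k u n = weps).
Proof.
  destruct (classic (exists N, forall n, (N <= n)%nat -> block k u n = weps)) as [H|H]; [right; auto|left].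
  assert (H' : forall N, exists n, (N <= n)%nat /\ block k u n <> weps).
  { intros N. apply NNPP. intro C. apply H. exists N. intros n Hn. apply NNPP. intro C2. apply C. eauto. }
  induction M. exists O; lia.
  destruct IHM as [n Hn]. destruct (H' n) as [n' [Hn' Hb]]. exists (S n').
  unfold Ln in *. rewrite sp_S, length_app.
  pose proof (Ln_mono k sigma u n (n' - n)). unfold Ln in H0. replace (n + (n' - n))%nat with n' in H0 by lia.
  pose proof (nonweps_len u n' Hb). lia.
Qed.

Lemma sp_event u N : (forall n, (N <= n)%nat -> block k u n = weps) ->
  forall j, sigma_prefix k sigma u (N + j) = sigma_prefix k sigma u N.
Proof.
  intros H j. induction j. rewrite Nat.add_0_r; auto.
  rewrite Nat.add_succ_r, sp_S, IHj, H by lia. rewrite heps, app_nil_r. reflexivity.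
Qed.

Lemma sv_approx u eps : 0 < eps -> exists n, sigma_val k sigma u <= V k sigma u n + eps.
Proof.
  intros He. destruct (dichot u) as [H|[N H]].
  - destruct (inv_pow2_small eps He) as [M HM]. destruct (H M) as [n Hn]. exists n.
    pose proof (sv_bounds k sigma u n).
    assert (/ 2 ^ Ln k sigma u n <= / 2 ^ M).
    { apply Rinv_le_contravar. apply p2pos. apply Rle_pow; lra || lia. }
    lra.
  - exists N. assert (Rbar_le (sigma_val k sigma u) (V k sigma u N)).
    { apply (is_lim_seq_le_loc (V k sigma u) (fun _ => V k sigma u N)).
      exists N. intros m Hm. unfold V. replace m with (N + (m - N))%nat by lia. rewrite sp_event; auto. lra.
      apply sv_lim. apply is_lim_seq_const. }
    simpl in H0. lra.
Qed.

End Sig.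

Set Default Proof Using "All".
Section Sig2.
Variables (k : nat) (sigma : list bool -> list bool) (weps : list bool).
Hypotheses (hk : (2 <= k)%nat) (hlen : length weps = k) (heps : sigma weps = [])
  (huniq : forall w : list bool, length w = k -> sigma w = [] -> w = weps)
  (hne : weps <> repeat true k).

Let F := fs k sigma weps.

Lemma agree_tilde x y m : 0 < x <= 1 -> 0 < y <= 1 -> Am m y = Am m x ->
  forall i, (i < m)%nat -> tilde y i = tilde x i.
Proof. intros Hx Hy E i Hi. rewrite !tilde_eq by auto. apply agree with m; auto. Qed.

Lemma lsc_core x : 0 < x <= 1 -> forall eps, 0 < eps -> exists m, forall y, 0 < y <= 1 ->
  Am m y = Am m x -> F x - eps <= F y.
Proof.
  intros Hx eps He. destruct (sv_approx k sigma weps hk hlen heps huniq hne (tilde x) eps He) as [n Hn].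
  exists (n * k)%nat. intros y Hy E. unfold F. rewrite !(FX k sigma weps hk hlen heps huniq hne) by (auto; lra).
  pose proof (sv_bounds k sigma (tilde y) n).
  assert (V k sigma (tilde y) n = V k sigma (tilde x) n).
  { unfold V. rewrite (sp_ext k sigma (tilde y) (tilde x)); auto. apply agree_tilde with (m := (n*k)%nat); auto. }
  lra.
Qed.

Lemma cont_core x : 0 < x <= 1 -> (forall M, exists n, (M <= Ln k sigma (tilde x) n)%nat) ->
  forall eps, 0 < eps -> exists m, forall y, 0 < y <= 1 ->
  Am m y = Am m x -> Rabs (F y - F x) < eps.
Proof.
  intros Hx HM eps He. destruct (inv_pow2_small eps He) as [M HM']. destruct (HM M) as [n Hn].
  exists (n * k)%nat. intros y Hy E. unfold F. rewrite !(FX k sigma weps hk hlen heps huniq hne) by (auto; lra).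
  pose proof (sv_bounds k sigma (tilde y) n). pose proof (sv_bounds k sigma (tilde x) n).
  assert (HS : sigma_prefix k sigma (tilde y) n = sigma_prefix k sigma (tilde x) n).
  { apply sp_ext. apply agree_tilde with (m := (n*k)%nat); auto. }
  unfold V, Ln in *. rewrite HS in *.
  assert (/ 2 ^ length (sigma_prefix k sigma (tilde x) n) <= / 2 ^ M).
  { apply Rinv_le_contravar. apply p2pos. apply Rle_pow; lra || lia. }
  apply Rabs_def1; lra.
Qed.

Lemma lsc_at x : 0 < x <= 1 -> (x = 1 \/ ~ dyadic x) -> forall eps, 0 < eps ->
  exists d, 0 < d /\ forall y, inI y -> Rabs (y - x) < d -> F x - eps <= F y.
Proof.
  intros Hx Hn eps He. destruct (lsc_core x Hx eps He) as [m Hm].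
  destruct (nbhd_two x m Hx Hn) as [d [Hd H]]. exists d. split; auto.
  intros y Hy Hyx. destruct (H y Hy Hyx). auto.
Qed.

Lemma cont_at x : 0 < x <= 1 -> (x = 1 \/ ~ dyadic x) ->
  (forall M, exists n, (M <= Ln k sigma (tilde x) n)%nat) -> continuous_at_in_I F x.
Proof.
  intros Hx Hn HM eps He. destruct (cont_core x Hx HM eps He) as [m Hm].
  destruct (nbhd_two x m Hx Hn) as [d [Hd H]]. exists d. split; auto.
  intros y Hy Hyx. destruct (H y Hy Hyx). auto.
Qed.

Lemma left_cont_at x : 0 < x <= 1 ->
  (forall M, exists n, (M <= Ln k sigma (tilde x) n)%nat) -> left_continuous_at_in_I F x.
Proof.
  intros Hx HM eps He. destruct (cont_core x Hx HM eps He) as [m Hm].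
  destruct (nbhd_left x m Hx) as [d [Hd H]]. exists d. split; auto.
  intros y Hy Hyx. destruct (H y Hyx). auto.
Qed.

Lemma dyadic_unbounded x a L : 0 < x <= 1 -> x = INR a / 2 ^ L ->
  forall M, exists n, (M <= Ln k sigma (tilde x) n)%nat.
Proof.
  intros Hx Ex. destruct (dichot k sigma weps hk hlen heps huniq hne (tilde x)) as [H|[N H]]; auto.
  exfalso. apply hne. rewrite <- (H (N + L)%nat) by lia.
  unfold block. rewrite (map_ext_in _ (fun _ => true)).
  rewrite map_const, length_seq. reflexivity.
  intros j Hj. rewrite tilde_eq by auto. apply dyadic_bits with a L; auto. nia.
Qed.

End Sig2.

Definition binZ (w : list bool) : Z := fold_left (fun a b => (2 * a + b2Z b)%Z) w 0%Z.

Lemma fold_gen w : forall acc, fold_left (fun a b => (2 * a + b2Z b)%Z) w acc = (pw2 (length w) * acc + binZ w)%Z.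
Proof.
  unfold binZ. induction w; intros acc. cbn [fold_left pw2 length]; lia.
  cbn [fold_left length]. rewrite IHw, (IHw (2 * 0 + b2Z a)%Z). change (pw2 (S (length w))) with (2 * pw2 (length w))%Z. nia.
Qed.

Lemma binZ_snoc w b : binZ (w ++ [b]) = (2 * binZ w + b2Z b)%Z.
Proof. unfold binZ. rewrite fold_left_app. reflexivity. Qed.

Lemma binZ_bounds w : (0 <= binZ w < pw2 (length w))%Z.
Proof.
  induction w. unfold binZ; cbn [fold_left length pw2]; lia.
  unfold binZ. cbn [fold_left length]. rewrite fold_gen. fold (binZ w).
  change (pw2 (S (length w))) with (2 * pw2 (length w))%Z.
  destruct a; cbn [b2Z]; nia.
Qed.

Lemma map_seq_shift {B} (g : nat -> B) m j : map g (seq m j) = map (fun i => g (m + i)%nat) (seq 0 j).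
Proof.
  induction j. reflexivity. rewrite !seq_S, !map_app, IHj. reflexivity.
Qed.

Lemma AmJ x m j : 0 < x <= 1 -> Am (m + j) x = (pw2 j * Am m x + binZ (map (tb x) (seq m j)))%Z.
Proof.
  intros Hx. induction j. rewrite Nat.add_0_r. cbn [pw2 seq map]. unfold binZ; cbn [fold_left]. lia.
  rewrite Nat.add_succ_r, Am_S, IHj, seq_S, map_app. simpl map. rewrite binZ_snoc.
  change (pw2 (S j)) with (2 * pw2 j)%Z. lia.
Qed.

Set Default Proof Using "All".
Section Sig3.
Variables (k : nat) (sigma : list bool -> list bool) (weps : list bool).
Hypotheses (hk : (2 <= k)%nat) (hlen : length weps = k) (heps : sigma weps = [])
  (huniq : forall w : list bool, length w = k -> sigma w = [] -> w = weps)
  (hne : weps <> repeat true k).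

Definition Kz := pw2 k.
Definition cz := binZ weps.
Definition ev (v : list bool) : R :=
  (IZR (binZ v) * (IZR Kz - 1) + IZR cz) / ((IZR Kz - 1) * 2 ^ length v).

Lemma Kz_ge : (4 <= Kz)%Z.
Proof.
  unfold Kz. replace k with (2 + (k - 2))%nat by lia. cbn [pw2 Nat.add].
  pose proof (pw2_pos (k - 2)). lia.
Qed.

Lemma cz_bounds : (0 <= cz <= Kz - 1)%Z.
Proof. unfold cz, Kz. pose proof (binZ_bounds weps). rewrite hlen in H. lia. Qed.

Lemma KR : IZR Kz = 2 ^ k.
Proof. apply pw2_IZR. Qed.

Lemma ev_range v : 0 <= ev v <= 1.
Proof.
  unfold ev. pose proof (binZ_bounds v) as [B1 B2]. pose proof cz_bounds as [C1 C2]. pose proof Kz_ge.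
  assert (HB1 : 0 <= IZR (binZ v)) by (apply IZR_le; lia).
  assert (HB2 : IZR (binZ v) <= 2 ^ length v - 1) by (rewrite <- pw2_IZR; rewrite <- minus_IZR; apply IZR_le; lia).
  assert (HC1 : 0 <= IZR cz) by (apply IZR_le; lia).
  assert (HC2 : IZR cz <= IZR Kz - 1) by (rewrite <- minus_IZR; apply IZR_le; lia).
  assert (HK : 4 <= IZR Kz) by (apply IZR_le; lia).
  pose proof (p2pos (length v)).
  assert (Hd : 0 < (IZR Kz - 1) * 2 ^ length v) by (apply Rmult_lt_0_compat; lra).
  split.
  - apply Rmult_le_pos. nra. left; apply Rinv_0_lt_compat; lra.
  - apply (Rmult_le_reg_l ((IZR Kz - 1) * 2 ^ length v)); auto.
    unfold Rdiv. rewrite <- Rmult_assoc, (Rmult_comm _ (IZR (binZ v) * (IZR Kz - 1) + IZR cz)), Rmult_assoc, Rinv_r by lra.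
    nra.
Qed.

Lemma ev_sep v a L : ev v = INR a / 2 ^ L \/
  / ((IZR Kz - 1) * 2 ^ length v * 2 ^ L) <= Rabs (ev v - INR a / 2 ^ L).
Proof.
  set (Z0 := ((binZ v * (Kz - 1) + cz) * pw2 L - Z.of_nat a * (Kz - 1) * pw2 (length v))%Z).
  pose proof Kz_ge. assert (HK : 4 <= IZR Kz) by (apply IZR_le; lia).
  pose proof (p2pos (length v)). pose proof (p2pos L).
  assert (Hd : 0 < (IZR Kz - 1) * 2 ^ length v * 2 ^ L) by (apply Rmult_lt_0_compat; [apply Rmult_lt_0_compat|]; lra).
  assert (E : (ev v - INR a / 2 ^ L) * ((IZR Kz - 1) * 2 ^ length v * 2 ^ L) = IZR Z0).
  { unfold Z0, ev. rewrite minus_IZR, !mult_IZR, plus_IZR, !mult_IZR, minus_IZR, !pw2_IZR, <- INR_IZR_INZ.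
    simpl IZR. field. split; lra. }
  destruct (Z.eq_dec Z0 0) as [Z|Z].
  - left. rewrite Z in E. simpl IZR in E. apply Rmult_integral in E. destruct E; lra.
  - right. assert (Hz1 : 1 <= Rabs (IZR Z0)).
    { destruct (Z_lt_le_dec Z0 0).
      - rewrite Rabs_left. assert (IZR Z0 <= -1) by (apply IZR_le; lia). lra. apply IZR_lt; lia.
      - rewrite Rabs_right. apply IZR_le; lia. apply Rle_ge, IZR_le; lia. }
    rewrite <- E, Rabs_mult, (Rabs_right ((IZR Kz - 1) * 2 ^ length v * 2 ^ L)) in Hz1 by lra.
    apply (Rmult_le_reg_r ((IZR Kz - 1) * 2 ^ length v * 2 ^ L)); auto.
    rewrite Rinv_l by lra. lra.
Qed.

Lemma block_tb x n : 0 < x <= 1 -> map (tb x) (seq (n * k) k) = block k (tilde x) n.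
Proof.
  intros Hx. rewrite map_seq_shift. unfold block. apply map_ext. intros i. rewrite tilde_eq; auto.
Qed.

Lemma event x N : 0 < x <= 1 -> (forall n, (N <= n)%nat -> block k (tilde x) n = weps) ->
  let v := map (tilde x) (seq 0 (N * k)) in
  length v = (N * k)%nat /\ x = ev v /\ forall i, tilde x i = v_winf k v weps i.
Proof.
  intros Hx H v.
  assert (Hlv : length v = (N * k)%nat) by (unfold v; rewrite length_map, length_seq; auto).
  split; [auto|split].
  - set (B := fun n => Am (n * k) x).
    assert (Hstep : forall n, (N <= n)%nat -> B (S n) = (Kz * B n + cz)%Z).
    { intros n Hn. unfold B. replace (S n * k)%nat with (n * k + k)%nat by lia.
      rewrite AmJ, block_tb, H by auto. reflexivity. }
    pose proof Kz_ge. assert (HK : 4 <= IZR Kz) by (apply IZR_le; lia).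
    set (K := IZR Kz). set (c := IZR cz). set (D := IZR (B N) * (K - 1) + c).
    assert (HK4 : 4 <= K) by (unfold K; apply IZR_le; lia).
    assert (Hcl : forall j, IZR (B (N + j)%nat) * (K - 1) + c = K ^ j * D).
    { induction j. rewrite Nat.add_0_r. simpl. unfold D; ring.
      rewrite Nat.add_succ_r, Hstep by lia. rewrite plus_IZR, mult_IZR. fold K c.
      replace (K ^ S j * D) with (K * (K ^ j * D)) by (simpl; ring). rewrite <- IHj. ring. }
    assert (HB0 : B N = binZ v).
    { unfold B. replace (N * k)%nat with (0 + N * k)%nat by lia. rewrite AmJ, Am_0 by auto.
      unfold v. rewrite (map_ext_in (tilde x) (tb x)). simpl. lia. intros; apply tilde_eq; auto. }
    set (q := D / ((K - 1) * 2 ^ (N * k))).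
    assert (Hq : q = ev v).
    { unfold q, ev, D. rewrite HB0, Hlv. reflexivity. }
    rewrite <- Hq.
    pose proof cz_bounds as [C1 C2].
    assert (HC1 : 0 <= c) by (apply IZR_le; lia).
    assert (HC2 : c <= K - 1) by (unfold c, K; rewrite <- minus_IZR; apply IZR_le; lia).
    assert (Hj : forall j, Rabs (x - q) <= / 2 ^ j).
    { intros j. destruct (Am_spec ((N + j) * k) x) as [A1 A2]. fold (B (N + j)%nat) in A1, A2.
      pose proof (Hcl j) as Hc.
      assert (HT : 2 ^ ((N + j) * k) = 2 ^ (N * k) * K ^ j).
      { rewrite Nat.mul_add_distr_r, pow_add. unfold K; rewrite KR, <- pow_mult, (Nat.mul_comm k j). reflexivity. }
      rewrite HT in A1, A2.
      pose proof (p2pos (N * k)). assert (HKj : 2 ^ j <= K ^ j) by (apply pow_incr; split; [lra| unfold K; apply IZR_le; lia]).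
      pose proof (p2pos j).
      set (T := 2 ^ (N * k) * K ^ j) in *.
      assert (HTj : 2 ^ j <= T).
      { unfold T. assert (1 <= 2 ^ (N * k)) by (apply pow_R1_Rle; lra). nra. }
      assert (HqT : T * q = K ^ j * D / (K - 1)).
      { unfold q, T. field. split; lra. }
      assert (HBq : IZR (B (N + j)%nat) = (K ^ j * D - c) / (K - 1)).
      { rewrite <- Hc. field. lra. }
      assert (Hlow : - 1 <= T * x - T * q) .
      { rewrite HqT. rewrite HBq in A1.
        assert (- c / (K - 1) >= -1).
        { apply Rle_ge. apply (Rmult_le_reg_r (K - 1)). lra. unfold Rdiv. rewrite Rmult_assoc, Rinv_l by lra. lra. }
        assert (E1 : (K ^ j * D - c) / (K - 1) = K ^ j * D / (K - 1) + - c / (K - 1)) by (field; lra).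
        lra. }
      assert (Hup : T * x - T * q <= 1).
      { rewrite HqT. rewrite HBq in A2.
        assert (E1 : (K ^ j * D - c) / (K - 1) = K ^ j * D / (K - 1) + - c / (K - 1)) by (field; lra).
        assert (- c / (K - 1) <= 0).
        { unfold Rdiv. assert (0 < / (K - 1)) by (apply Rinv_0_lt_compat; lra). nra. }
        lra. }
      assert (HT0 : 0 < T) by lra.
      assert (Habs : Rabs (x - q) * T <= 1).
      { rewrite <- (Rabs_right T) by lra. rewrite <- Rabs_mult. apply Rabs_le. split; nra. }
      apply (Rmult_le_reg_r (2 ^ j)); auto. rewrite Rinv_l by lra.
      assert (0 <= Rabs (x - q)) by apply Rabs_pos. nra. }
    apply NNPP. intro Hneq. assert (Hpos : 0 < Rabs (x - q)) by (apply Rabs_pos_lt; lra).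
    destruct (inv_pow2_small _ Hpos) as [j Hj']. specialize (Hj j). lra.
  - intros i. unfold v_winf. rewrite Hlv. destruct (Nat.ltb i (N * k)) eqn:E.
    + apply Nat.ltb_lt in E. unfold v.
      rewrite (nth_indep _ false (tilde x 0%nat)) by (rewrite length_map, length_seq; auto).
      rewrite map_nth, seq_nth by auto. reflexivity.
    + apply Nat.ltb_ge in E.
      pose proof (Nat.div_mod_eq i k) as Ei. pose proof (Nat.mod_upper_bound i k ltac:(lia)).
      set (n := (i / k)%nat) in *. set (r := (i mod k)%nat) in *.
      assert (Hn : (N <= n)%nat) by nia.
      replace (i - N * k)%nat with ((n - N) * k + r)%nat by nia.
      rewrite (mod_block k sigma weps hk hlen heps huniq hne) by auto.
      replace i with (n * k + r)%nat at 1 by lia.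
      rewrite <- block_nth by auto. rewrite H by auto. reflexivity.
Qed.

Lemma ev_rat v : exists q : Q, ev v = Q2R q.
Proof.
  pose proof Kz_ge. pose proof (pw2_pos (length v)).
  exists (Qmake (binZ v * (Kz - 1) + cz) (Z.to_pos ((Kz - 1) * pw2 (length v)))).
  unfold Q2R. cbn [Qnum Qden]. rewrite Z2Pos.id by nia.
  unfold ev. rewrite plus_IZR, !mult_IZR, minus_IZR, pw2_IZR. reflexivity.
Qed.

End Sig3.

Lemma dyadic_0 : dyadic 0.
Proof. split. unfold inI; lra. exists O, O. simpl. field. Qed.
Lemma dyadic_1 : dyadic 1.
Proof. split. unfold inI; lra. exists 1%nat, O. simpl. field. Qed.

Lemma dyadic_rat x : dyadic x -> exists q : Q, x = Q2R q.
Proof.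
  intros [_ [m [n E]]]. pose proof (pw2_pos n).
  exists (Qmake (Z.of_nat m) (Z.to_pos (pw2 n))). unfold Q2R. cbn [Qnum Qden].
  rewrite Z2Pos.id by lia. rewrite E, INR_IZR_INZ, pw2_IZR. reflexivity.
Qed.

Definition qenum (n : nat) : R :=
  let (a, r) := Cantor.of_nat n in let (b, c) := Cantor.of_nat r in
  Q2R (Qmake (Z.of_nat a - Z.of_nat b) (Pos.of_succ_nat c)).

Lemma qenum_surj (q : Q) : exists n, qenum n = Q2R q.
Proof.
  destruct q as [z p].
  exists (Cantor.to_nat (Z.to_nat z, Cantor.to_nat (Z.to_nat (- z), Nat.pred (Pos.to_nat p)))).
  unfold qenum. rewrite !Cantor.cancel_of_to.
  replace (Z.of_nat (Z.to_nat z) - Z.of_nat (Z.to_nat (- z)))%Z with z by lia.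
  rewrite (SuccNat2Pos.inv _ p). reflexivity. pose proof (Pos2Nat.is_pos p). lia.
Qed.

Set Default Proof Using "All".
Section Sig4.
Variables (k : nat) (sigma : list bool -> list bool) (weps : list bool).
Hypotheses (hk : (2 <= k)%nat) (hlen : length weps = k) (heps : sigma weps = [])
  (huniq : forall w : list bool, length w = k -> sigma w = [] -> w = weps)
  (hne : weps <> repeat true k).

Lemma event_E x N : 0 < x <= 1 -> (forall n, (N <= n)%nat -> block k (tilde x) n = weps) ->
  E_sigma k weps x.
Proof.
  intros Hx H. destruct (event k sigma weps hk hlen heps huniq hne x N Hx H) as [Hl [Hev Hw]].
  split. unfold inI; lra. split.
  - destruct (ev_rat k sigma weps hk hlen heps huniq hne (map (tilde x) (seq 0 (N * k)))) as [q Hq].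
    exists q. rewrite Hev; auto.
  - exists (map (tilde x) (seq 0 (N * k))), N. split; auto.
    unfold ival. rewrite (Series_ext _ (fun i => b2R (tilde x i) / 2 ^ S i)).
    symmetry. apply is_series_unique. apply (tilde_spec x Hx).
    intros n. rewrite Hw. reflexivity.
Qed.

Lemma part1 x : C_sigma k weps x -> continuous_at_in_I (f_sigma k sigma weps) x.
Proof.
  intros [HI [Hd0 HE]].
  assert (Hx0 : x <> 0) by (intro E; subst; apply Hd0; split; [apply dyadic_0|lra]).
  assert (Hx : 0 < x <= 1) by (unfold inI in HI; lra).
  assert (Hn : x = 1 \/ ~ dyadic x).
  { destruct (Req_dec x 1); auto. right. intro D. apply Hd0. split; auto. }
  destruct (dichot k sigma weps hk hlen heps huniq hne (tilde x)) as [HM|[N HN]].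
  - apply (cont_at k sigma weps hk hlen heps huniq hne x Hx Hn HM).
  - exfalso. apply HE. apply (event_E x N Hx HN).
Qed.

Lemma part2 : countable_set (fun x => inI x /\ ~ C_sigma k weps x).
Proof.
  exists qenum. intros x [HI HC].
  assert (Hq : exists q : Q, x = Q2R q).
  { unfold C_sigma in HC. destruct (classic (dyadic0 x)) as [[D _]|ND].
    - apply dyadic_rat; auto.
    - destruct (classic (E_sigma k weps x)) as [[_ [Hq _]]|NE]; auto.
      exfalso; apply HC; auto. }
  destruct Hq as [q Hq]. destruct (qenum_surj q) as [n Hn]. exists n. rewrite Hn; auto.
Qed.

Lemma part4 x : dyadic x -> x <> 0 -> left_continuous_at_in_I (f_sigma k sigma weps) x.
Proof.
  intros [HI [a [L E]]] Hx0.
  assert (Hx : 0 < x <= 1) by (unfold inI in HI; lra).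
  apply (left_cont_at k sigma weps hk hlen heps huniq hne x Hx).
  apply (dyadic_unbounded k sigma weps hk hlen heps huniq hne x a L Hx E).
Qed.

End Sig4.

Definition cpt (g : R -> R) x := forall e : R, 0 < e -> exists d : R, 0 < d /\
  forall y, Rabs (y - x) < d -> Rabs (g y - g x) < e.

Lemma cpt_cont g x : cpt g x <-> continuity_pt g x.
Proof.
  unfold continuity_pt, continue_in, limit1_in, limit_in, D_x, no_cond, cpt. simpl. unfold Rdist. split.
  - intros H e He. destruct (H e He) as [d [Hd H']]. exists d. split; auto. intros y [_ Hy]. apply H'; auto.
  - intros H e He. destruct (H e He) as [d [Hd H']]. exists d. split; auto. intros y Hy.
    destruct (Req_dec x y). subst. rewrite Rminus_diag, Rabs_R0; auto. apply H'. auto.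
Qed.

Lemma cpt_lip g x C : 0 <= C -> (forall y, Rabs (g y - g x) <= C * Rabs (y - x)) -> cpt g x.
Proof.
  intros HC H e He. exists (e / (C + 1)). split. apply Rdiv_lt_0_compat; lra.
  intros y Hy. eapply Rle_lt_trans. apply H.
  assert (C * Rabs (y - x) <= C * (e / (C + 1))) by (apply Rmult_le_compat_l; lra).
  assert (C * (e / (C + 1)) < e).
  { apply (Rmult_lt_reg_r (C + 1)). lra. unfold Rdiv. rewrite Rmult_assoc, Rmult_assoc, Rinv_l by lra. nra. }
  lra.
Qed.

Lemma cpt_plus g h x : cpt g x -> cpt h x -> cpt (fun y => g y + h y) x.
Proof. intros H1 H2. apply cpt_cont. apply cpt_cont in H1, H2. exact (continuity_pt_plus g h x H1 H2). Qed.

Lemma cpt_div g h x : cpt g x -> cpt h x -> h x <> 0 -> cpt (fun y => g y / h y) x.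
Proof. intros H1 H2 H3. apply cpt_cont. apply cpt_cont in H1, H2. exact (continuity_pt_div g h x H1 H2 H3). Qed.

Lemma cpt_sum (a : nat -> R -> R) x N : (forall j, (j <= N)%nat -> cpt (a j) x) ->
  cpt (fun y => sum_f_R0 (fun j => a j y) N) x.
Proof.
  induction N; intros H. simpl. apply H; lia.
  simpl. apply (cpt_plus (fun y => sum_f_R0 (fun j => a j y) N) (a (S N))). apply IHN; auto. apply H; lia.
Qed.

Lemma Rmin_lip a b c d : Rabs (Rmin a b - Rmin c d) <= Rmax (Rabs (a - c)) (Rabs (b - d)).
Proof.
  pose proof (Rmax_l (Rabs (a - c)) (Rabs (b - d))). pose proof (Rmax_r (Rabs (a - c)) (Rabs (b - d))).
  pose proof (Rle_abs (a - c)). pose proof (Rle_abs (b - d)).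
  pose proof (Rabs_pos (a - c)). rewrite <- Rabs_Ropp in H1, H2. pose proof (Rle_abs (- (a - c))).
  pose proof (Rle_abs (- (b - d))). rewrite Rabs_Ropp in *.
  apply Rabs_le. unfold Rmin. destruct (Rle_dec a b), (Rle_dec c d); split; lra.
Qed.

Lemma cpt_min g h x : cpt g x -> cpt h x -> cpt (fun y => Rmin (g y) (h y)) x.
Proof.
  intros H1 H2 e He. destruct (H1 e He) as [d1 [Hd1 K1]]. destruct (H2 e He) as [d2 [Hd2 K2]].
  exists (Rmin d1 d2). split. apply Rmin_pos; auto. intros y Hy.
  eapply Rle_lt_trans. apply Rmin_lip. apply Rmax_lub_lt.
  apply K1. pose proof (Rmin_l d1 d2); lra. apply K2. pose proof (Rmin_r d1 d2); lra.
Qed.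

Lemma Rmax0_lip a b : Rabs (Rmax 0 a - Rmax 0 b) <= Rabs (a - b).
Proof.
  pose proof (Rle_abs (a - b)). pose proof (Rle_abs (- (a - b))). rewrite Rabs_Ropp in H0.
  apply Rabs_le. unfold Rmax. destruct (Rle_dec 0 a), (Rle_dec 0 b); split; lra.
Qed.

Definition hat (n j : nat) (x : R) : R := Rmax 0 (1 - Rabs (2 ^ n * x - INR j)).

Lemma hat_nonneg n j x : 0 <= hat n j x.
Proof. apply Rmax_l. Qed.

Lemma hat_cpt n j x : cpt (hat n j) x.
Proof.
  apply cpt_lip with (2 ^ n). left; apply p2pos. intros y. unfold hat.
  eapply Rle_trans. apply Rmax0_lip.
  replace (1 - Rabs (2 ^ n * y - INR j) - (1 - Rabs (2 ^ n * x - INR j))) with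
    (- (Rabs (2 ^ n * y - INR j) - Rabs (2 ^ n * x - INR j))) by ring.
  rewrite Rabs_Ropp. eapply Rle_trans. apply Rabs_triang_inv2.
  replace (2 ^ n * y - INR j - (2 ^ n * x - INR j)) with (2 ^ n * (y - x)) by ring.
  rewrite Rabs_mult, (Rabs_right (2 ^ n)). lra. left; apply p2pos.
Qed.

Lemma hat_pos_close n j x : 0 < hat n j x -> Rabs (INR j / 2 ^ n - x) < / 2 ^ n.
Proof.
  unfold hat, Rmax. destruct (Rle_dec 0 _); [|lra]. intros H.
  pose proof (p2pos n).
  replace (INR j / 2 ^ n - x) with (- (2 ^ n * x - INR j) * / 2 ^ n) by (field; lra).
  rewrite Rabs_mult, Rabs_Ropp, Rabs_inv, (Rabs_right (2 ^ n)) by lra.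
  rewrite <- (Rmult_1_l (/ 2 ^ n)) at 2. apply Rmult_lt_compat_r. apply Rinv_0_lt_compat; lra. lra.
Qed.

Lemma sum_nonneg (a : nat -> R) N : (forall i, (i <= N)%nat -> 0 <= a i) -> 0 <= sum_f_R0 a N.
Proof.
  induction N; intros H; simpl. apply H; lia. pose proof (H (S N) (le_n _)).
  assert (0 <= sum_f_R0 a N) by (apply IHN; intros; apply H; lia). lra.
Qed.

Lemma sum_ge_term (a : nat -> R) N j : (forall i, (i <= N)%nat -> 0 <= a i) -> (j <= N)%nat -> a j <= sum_f_R0 a N.
Proof.
  induction N; intros H Hj. replace j with O by lia. simpl; lra.
  simpl. destruct (Nat.eq_dec j (S N)) as [E|E].
  - subst. assert (0 <= sum_f_R0 a N) by (apply sum_nonneg; intros; apply H; lia). lra.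
  - assert (a j <= sum_f_R0 a N) by (apply IHN; auto; lia). pose proof (H (S N) (le_n _)). lra.
Qed.

Lemma INR_M n : INR (2 ^ n)%nat = 2 ^ n.
Proof. rewrite pow_INR. simpl INR. f_equal. Qed.

Lemma node_in_I n j : (j <= 2 ^ n)%nat -> inI (INR j / 2 ^ n).
Proof.
  intros Hj. pose proof (p2pos n). apply le_INR in Hj. rewrite INR_M in Hj. pose proof (pos_INR j).
  split. apply Rmult_le_pos; [lra| left; apply Rinv_0_lt_compat; lra].
  apply (Rmult_le_reg_r (2 ^ n)); auto. unfold Rdiv. rewrite Rmult_assoc, Rinv_l; lra.
Qed.

Lemma den_pos n x : inI x -> 0 < sum_f_R0 (fun j => hat n j x) (2 ^ n)%nat.
Proof.
  intros Hx. set (r := 2 ^ n * x). pose proof (p2pos n).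
  assert (Hr : 0 <= r <= 2 ^ n) by (unfold r, inI in *; split; nra).
  destruct (archimed r) as [A1 A2].
  set (z := (up r - 1)%Z).
  assert (Hz0 : (0 <= z)%Z) by (assert (0 < up r)%Z by (apply lt_IZR; simpl; lra); unfold z; lia).
  assert (Hzr : IZR z <= r < IZR z + 1) by (unfold z; rewrite minus_IZR; simpl; lra).
  set (j0 := Z.to_nat z).
  assert (Hj0 : INR j0 = IZR z) by (unfold j0; rewrite INR_IZR_INZ, Z2Nat.id; auto).
  assert (Hpos : 0 < hat n j0 x).
  { unfold hat. fold r. rewrite Hj0. rewrite Rabs_right by lra. eapply Rlt_le_trans; [|apply Rmax_r]. lra. }
  eapply Rlt_le_trans. apply Hpos. apply (sum_ge_term (fun j => hat n j x)).
  intros; apply hat_nonneg. apply INR_le. rewrite INR_M, Hj0. lra.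
Qed.

Lemma nat_close i j : Rabs (INR i - INR j) < 1 -> i = j.
Proof.
  intros H. apply Rabs_def2 in H. destruct (Nat.lt_total i j) as [L|[L|L]]; auto; exfalso.
  - apply le_INR in L. rewrite S_INR in L. lra.
  - apply le_INR in L. rewrite S_INR in L. lra.
Qed.

Fixpoint words (l : nat) : list (list bool) :=
  match l with O => [[]] | S l => flat_map (fun w => [false :: w; true :: w]) (words l) end.

Lemma In_words v : In v (words (length v)).
Proof.
  induction v; simpl. auto. apply in_flat_map. exists v. split; auto. destruct a; simpl; auto.
Qed.

Lemma words_len l v : In v (words l) -> length v = l.
Proof.
  revert v. induction l; simpl; intros v H. destruct H as [H|[]]; subst; auto.
  apply in_flat_map in H. destruct H as [w [Hw Hv]]. simpl in Hv.
  destruct Hv as [E|[E|[]]]; subst; simpl; f_equal; auto.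
Qed.

Set Default Proof Using "All".
Section Sig5.
Variables (k : nat) (sigma : list bool -> list bool) (weps : list bool).
Hypotheses (hk : (2 <= k)%nat) (hlen : length weps = k) (heps : sigma weps = [])
  (huniq : forall w : list bool, length w = k -> sigma w = [] -> w = weps)
  (hne : weps <> repeat true k).

Let F := f_sigma k sigma weps.
Let EV := ev k weps.

Definition num n x := sum_f_R0 (fun j => f_sigma k sigma weps (INR j / 2 ^ n) * hat n j x) (2 ^ n)%nat.
Definition den n x := sum_f_R0 (fun j => hat n j x) (2 ^ n)%nat.
Definition Pn n x := num n x / den n x.
Definition centers n := flat_map (fun m => words (m * k)) (seq 0 (S n)).
Definition sn (n : nat) : R := 2 ^ (n * k + n + k + 1).
Definition tent n v x := f_sigma k sigma weps (ev k weps v) + sn n * Rabs (x - ev k weps v).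
Definition Qn n x := fold_right (fun v acc => Rmin acc (tent n v x)) 2 (centers n).
Definition Hn n x := Rmin (Pn n x) (Qn n x).

Lemma F_range x : 0 <= F x <= 1.
Proof. apply (f_range k sigma weps hk hlen heps huniq hne). Qed.

Lemma In_centers v N n : length v = (N * k)%nat -> (N <= n)%nat -> In v (centers n).
Proof.
  intros Hl Hn. unfold centers. apply in_flat_map. exists N. split. apply in_seq; lia.
  rewrite <- Hl. apply In_words.
Qed.

Lemma centers_len v n : In v (centers n) -> (length v <= n * k)%nat.
Proof.
  unfold centers. intros H. apply in_flat_map in H. destruct H as [m [Hm Hv]].
  apply in_seq in Hm. apply words_len in Hv. rewrite Hv. nia.
Qed.

Lemma Pn_cpt n x : inI x -> cpt (Pn n) x.
Proof.
  intros Hx. unfold Pn. apply cpt_div.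
  - unfold num. apply (cpt_sum (fun j y => F (INR j / 2 ^ n) * hat n j y)). intros j _.
    apply cpt_lip with (Rabs (F (INR j / 2 ^ n)) * 2 ^ n).
    apply Rmult_le_pos. apply Rabs_pos. left; apply p2pos.
    intros y. rewrite <- Rmult_minus_distr_l, Rabs_mult, Rmult_assoc. apply Rmult_le_compat_l. apply Rabs_pos.
    unfold hat. eapply Rle_trans. apply Rmax0_lip.
    replace (1 - Rabs (2 ^ n * y - INR j) - (1 - Rabs (2 ^ n * x - INR j))) with
      (- (Rabs (2 ^ n * y - INR j) - Rabs (2 ^ n * x - INR j))) by ring.
    rewrite Rabs_Ropp. eapply Rle_trans. apply Rabs_triang_inv2.
    replace (2 ^ n * y - INR j - (2 ^ n * x - INR j)) with (2 ^ n * (y - x)) by ring.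
    rewrite Rabs_mult, (Rabs_right (2 ^ n)). lra. left; apply p2pos.
  - unfold den. apply (cpt_sum (fun j y => hat n j y)). intros; apply hat_cpt.
  - pose proof (den_pos n x Hx). unfold den. lra.
Qed.

Lemma tent_cpt n v x : cpt (tent n v) x.
Proof.
  apply cpt_lip with (sn n). left; apply p2pos. intros y. unfold tent.
  replace (f_sigma k sigma weps (ev k weps v) + sn n * Rabs (y - ev k weps v) - (f_sigma k sigma weps (ev k weps v) + sn n * Rabs (x - ev k weps v)))
    with (sn n * (Rabs (y - ev k weps v) - Rabs (x - ev k weps v))) by (unfold F; ring).
  rewrite Rabs_mult, (Rabs_right (sn n)) by (left; apply p2pos).
  apply Rmult_le_compat_l. left; apply p2pos.
  replace (y - x) with ((y - ev k weps v) - (x - ev k weps v)) by ring. apply Rabs_triang_inv2.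
Qed.

Lemma Qn_cpt n x : cpt (Qn n) x.
Proof.
  unfold Qn. induction (centers n) as [|v l IH]; simpl.
  - apply cpt_lip with 0. lra. intros; rewrite Rminus_diag, Rabs_R0; lra.
  - apply (cpt_min (fun y => fold_right (fun v0 acc => Rmin acc (tent n v0 y)) 2 l) (tent n v)); auto.
    apply tent_cpt.
Qed.

Lemma Hn_cont n x : inI x -> continuous_at_in_I (Hn n) x.
Proof.
  intros Hx e He. destruct (cpt_min (Pn n) (Qn n) x (Pn_cpt n x Hx) (Qn_cpt n x) e He) as [d [Hd H]].
  exists d. split; auto. intros y _ Hy. apply H; auto.
Qed.

Lemma Pn_lower n x c : inI x -> (forall j, (j <= 2 ^ n)%nat -> 0 < hat n j x -> c <= F (INR j / 2 ^ n)) -> c <= Pn n x.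
Proof.
  intros Hx H. pose proof (den_pos n x Hx). unfold Pn.
  apply (Rmult_le_reg_r (den n x)); auto. unfold Rdiv. rewrite Rmult_assoc, Rinv_l by (unfold den in *; lra).
  rewrite Rmult_1_r. unfold den, num. rewrite scal_sum. apply sum_Rle. intros j Hj.
  pose proof (hat_nonneg n j x). destruct H1 as [H1|H1].
  - rewrite (Rmult_comm (hat n j x) c). apply Rmult_le_compat_r; [lra|]. apply H; auto.
  - rewrite <- H1. lra.
Qed.

Lemma Pn_upper n x c : inI x -> (forall j, (j <= 2 ^ n)%nat -> 0 < hat n j x -> F (INR j / 2 ^ n) <= c) -> Pn n x <= c.
Proof.
  intros Hx H. pose proof (den_pos n x Hx). unfold Pn.
  apply (Rmult_le_reg_r (den n x)); auto. unfold Rdiv. rewrite Rmult_assoc, Rinv_l by (unfold den in *; lra).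
  rewrite Rmult_1_r. unfold den, num. rewrite scal_sum. apply sum_Rle. intros j Hj.
  pose proof (hat_nonneg n j x). destruct H1 as [H1|H1].
  - rewrite (Rmult_comm (hat n j x) c). apply Rmult_le_compat_r; [lra|]. apply H; auto.
  - rewrite <- H1. lra.
Qed.

Lemma Qn_le n v x : In v (centers n) -> Qn n x <= tent n v x.
Proof.
  unfold Qn. induction (centers n) as [|w l IH]; simpl; intros H. contradiction.
  destruct H as [E|H]. subst. apply Rmin_r. eapply Rle_trans. apply Rmin_l. auto.
Qed.

Lemma Qn_ge n x c : c <= 2 -> (forall v, In v (centers n) -> c <= tent n v x) -> c <= Qn n x.
Proof.
  unfold Qn. induction (centers n) as [|w l IH]; simpl; intros H1 H2. auto.
  apply Rmin_glb. apply IH; auto. apply H2; auto.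
Qed.

End Sig5.

Lemma eventually_small d : 0 < d -> exists n0, forall n, (n0 <= n)%nat -> / 2 ^ n < d.
Proof.
  intros Hd. destruct (inv_pow2_small d Hd) as [n0 H]. exists n0. intros n Hn.
  eapply Rle_lt_trans; [|apply H]. apply Rinv_le_contravar. apply p2pos. apply Rle_pow; lra || lia.
Qed.

Lemma hat_pos_abs n j x : 0 < hat n j x -> Rabs (2 ^ n * x - INR j) < 1.
Proof. unfold hat, Rmax. destruct (Rle_dec 0 _); lra. Qed.

Set Default Proof Using "All".
Section Sig6.
Variables (k : nat) (sigma : list bool -> list bool) (weps : list bool).
Hypotheses (hk : (2 <= k)%nat) (hlen : length weps = k) (heps : sigma weps = [])
  (huniq : forall w : list bool, length w = k -> sigma w = [] -> w = weps)
  (hne : weps <> repeat true k).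

Let F := f_sigma k sigma weps.
Let FR := F_range k sigma weps hk hlen heps huniq hne.

Lemma sn_ge n : 2 ^ n <= sn k n.
Proof. unfold sn. apply Rle_pow; lra || lia. Qed.

Lemma tent_nonneg_part n v x : F (ev k weps v) <= tent k sigma weps n v x.
Proof.
  unfold tent. assert (0 <= sn k n * Rabs (x - ev k weps v)).
  { apply Rmult_le_pos. left; apply p2pos. apply Rabs_pos. } unfold F; lra.
Qed.

Lemma dyadic_conv x a L : inI x -> x = INR a / 2 ^ L -> forall n, (L <= n)%nat -> Hn k sigma weps n x = F x.
Proof.
  intros Hx Ex n HnL.
  assert (Hint : 2 ^ n * x = INR (a * 2 ^ (n - L))).
  { rewrite mult_INR, pow_INR, Ex. simpl INR.
    replace n with (L + (n - L))%nat at 1 by lia. rewrite pow_add. pose proof (p2pos L).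
    replace (1 + 1) with 2 by ring. field. lra. }
  assert (HP : Pn k sigma weps n x = F x).
  { assert (Hj : forall j, 0 < hat n j x -> INR j / 2 ^ n = x).
    { intros j Hh. apply hat_pos_abs in Hh. rewrite Hint in Hh. apply nat_close in Hh.
      rewrite <- Hh, <- Hint. pose proof (p2pos n). field. lra. }
    apply Rle_antisym.
    - apply (Pn_upper k sigma weps hk hlen heps huniq hne); auto. intros j _ Hh. rewrite Hj; auto. unfold F; lra.
    - apply (Pn_lower k sigma weps hk hlen heps huniq hne); auto. intros j _ Hh. rewrite Hj; auto. unfold F; lra. }
  assert (HQ : F x <= Qn k sigma weps n x).
  { apply (Qn_ge k sigma weps hk hlen heps huniq hne). pose proof (FR x); unfold F in *; lra.
    intros v Hv. destruct (ev_sep k sigma weps hk hlen heps huniq hne v a L) as [E|E].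
    - rewrite <- Ex in E. rewrite <- E. apply tent_nonneg_part.
    - rewrite <- Ex in E. unfold tent.
      pose proof (FR x). pose proof (FR (ev k weps v)).
      pose proof (Kz_ge k sigma weps hk hlen heps huniq hne) as HK. apply IZR_le in HK.
      pose proof (KR k sigma weps hk hlen heps huniq hne) as HKR.
      pose proof (centers_len k sigma weps hk hlen heps huniq hne v n Hv) as Hl.
      set (l := length v) in *.
      assert (Hden : 0 < (IZR (Kz k) - 1) * 2 ^ l * 2 ^ L).
      { pose proof (p2pos l). pose proof (p2pos L). apply Rmult_lt_0_compat; [apply Rmult_lt_0_compat|]; lra. }
      assert (Hden2 : (IZR (Kz k) - 1) * 2 ^ l * 2 ^ L <= 2 ^ (n * k + n + k)).
      { rewrite !pow_add. pose proof (p2pos l). pose proof (p2pos L).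
        assert (2 ^ l <= 2 ^ (n * k)) by (apply Rle_pow; lra || lia).
        assert (2 ^ L <= 2 ^ n) by (apply Rle_pow; lra || lia).
        assert (IZR (Kz k) - 1 <= 2 ^ k) by lra.
        assert (0 <= IZR (Kz k) - 1) by lra.
        rewrite (Rmult_comm (2 ^ (n * k) * 2 ^ n) (2 ^ k)), <- Rmult_assoc.
        apply Rmult_le_compat; try lra. apply Rmult_le_pos; lra.
        apply Rmult_le_compat; lra. }
      assert (Hsn : sn k n = 2 * 2 ^ (n * k + n + k)).
      { unfold sn. rewrite (Nat.add_comm _ 1). simpl. reflexivity. }
      assert (2 <= sn k n * Rabs (x - ev k weps v)).
      { rewrite Rabs_minus_sym. 
        assert (Hinv : / 2 ^ (n * k + n + k) <= / ((IZR (Kz k) - 1) * 2 ^ l * 2 ^ L)).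
        { apply Rinv_le_contravar; auto. }
        assert (sn k n * / 2 ^ (n * k + n + k) = 2) by (rewrite Hsn; field; apply pow_nonzero; lra).
        assert (0 <= sn k n) by (left; apply p2pos).
        assert (sn k n * / 2 ^ (n * k + n + k) <= sn k n * Rabs (ev k weps v - x)).
        { apply Rmult_le_compat_l; auto. lra. }
        lra. }
      unfold F in *; lra. }
  unfold Hn. rewrite HP. apply Rmin_left. auto.
Qed.

Lemma nondyadic_conv x : inI x -> ~ dyadic x -> Un_cv (fun n => Hn k sigma weps n x) (F x).
Proof.
  intros Hx Hnd eps He.
  assert (Hx0 : x <> 0) by (intro E; subst; apply Hnd, dyadic_0).
  assert (Hx1 : x <> 1) by (intro E; subst; apply Hnd, dyadic_1).
  assert (Hx' : 0 < x <= 1) by (unfold inI in Hx; lra).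
  set (e := eps / 2). assert (He2 : 0 < e) by (unfold e; lra).
  destruct (lsc_at k sigma weps hk hlen heps huniq hne x Hx' (or_intror Hnd) e He2) as [d1 [Hd1 Hlsc]].
  destruct (eventually_small (d1 / 2) ltac:(lra)) as [n0 Hn0].
  assert (Hupper : exists n1, forall n, (n1 <= n)%nat -> Hn k sigma weps n x <= F x + e).
  { destruct (dichot k sigma weps hk hlen heps huniq hne (tilde x)) as [HM|[N HN]].
    - pose proof (cont_at k sigma weps hk hlen heps huniq hne x Hx' (or_intror Hnd) HM) as Hc.
      destruct (Hc e He2) as [d2 [Hd2 Hc2]].
      destruct (eventually_small d2 Hd2) as [n1 Hn1]. exists n1. intros n Hnn.
      unfold Hn. eapply Rle_trans. apply Rmin_l.
      apply (Pn_upper k sigma weps hk hlen heps huniq hne); auto. intros j Hj Hh.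
      apply hat_pos_close in Hh. specialize (Hn1 n Hnn).
      assert (Rabs (F (INR j / 2 ^ n) - F x) < e).
      { apply Hc2. apply node_in_I; auto. lra. }
      apply Rabs_def2 in H. unfold F in *; lra.
    - destruct (event k sigma weps hk hlen heps huniq hne x N Hx' HN) as [Hl [Hev _]].
      exists N. intros n Hnn. unfold Hn. eapply Rle_trans. apply Rmin_r.
      eapply Rle_trans. apply (Qn_le k sigma weps hk hlen heps huniq hne n (map (tilde x) (seq 0 (N * k))) x).
      apply (In_centers k sigma weps hk hlen heps huniq hne) with N; eauto.
      unfold tent. rewrite <- Hev, Rminus_diag, Rabs_R0, Rmult_0_r. unfold F; lra. }
  destruct Hupper as [n1 Hn1].
  exists (max n0 n1). intros n Hnn. unfold Rdist.
  assert (Hlow : F x - e <= Hn k sigma weps n x).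
  { specialize (Hn0 n ltac:(lia)). unfold Hn. apply Rmin_glb.
    - apply (Pn_lower k sigma weps hk hlen heps huniq hne); auto. intros j Hj Hh.
      apply hat_pos_close in Hh. apply Hlsc. apply node_in_I; auto. lra.
    - apply (Qn_ge k sigma weps hk hlen heps huniq hne). pose proof (FR x); unfold F in *; lra.
      intros v Hv. destruct (Rlt_dec (Rabs (ev k weps v - x)) d1) as [Hc|Hc].
      + apply Rle_trans with (F (ev k weps v)). apply Hlsc; auto. apply (ev_range k sigma weps hk hlen heps huniq hne).
        apply tent_nonneg_part.
      + unfold tent. pose proof (FR x). pose proof (FR (ev k weps v)). rewrite Rabs_minus_sym.
        pose proof (sn_ge n). pose proof (p2pos n).
        assert (2 < 2 ^ n * d1).
        { apply (Rmult_lt_reg_l (/ 2 ^ n)). apply Rinv_0_lt_compat; lra.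
          rewrite <- Rmult_assoc, Rinv_l, Rmult_1_l by lra. lra. }
        assert (2 ^ n * d1 <= sn k n * Rabs (ev k weps v - x)) by (apply Rmult_le_compat; lra).
        unfold F in *; lra. }
  specialize (Hn1 n ltac:(lia)). apply Rabs_def1; unfold e in *; lra.
Qed.

Lemma part3 : baire_class_1_on_I F.
Proof.
  exists (Hn k sigma weps). split.
  - intros n x Hx. apply (Hn_cont k sigma weps hk hlen heps huniq hne n x Hx).
  - intros x Hx. destruct (classic (dyadic x)) as [[_ [a [L E]]]|ND].
    + intros eps He. exists L. intros n Hnn. rewrite (dyadic_conv x a L Hx E n Hnn).
      unfold Rdist. rewrite Rminus_diag, Rabs_R0; auto.
    + apply nondyadic_conv; auto.
Qed.

End Sig6.

Theorem lemma3p2 (k : nat) (sigma : list bool -> list bool) (weps : list bool)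
  (hk : (2 <= k)%nat)
  (hlen : length weps = k)
  (heps : sigma weps = [])
  (huniq : forall w : list bool, length w = k -> sigma w = [] -> w = weps)
  (hne : weps <> repeat true k) :
  (forall x : R, C_sigma k weps x -> continuous_at_in_I (f_sigma k sigma weps) x)
  /\ countable_set (fun x => inI x /\ ~ C_sigma k weps x)
  /\ baire_class_1_on_I (f_sigma k sigma weps)
  /\ (forall x : R, dyadic x -> x <> 0 ->
        left_continuous_at_in_I (f_sigma k sigma weps) x).
Proof.
  split; [|split; [|split]].
  - apply (part1 k sigma weps hk hlen heps huniq hne).
  - apply (part2 k sigma weps hk hlen heps huniq hne).
  - apply (part3 k sigma weps hk hlen heps huniq hne).
  - apply (part4 k sigma weps hk hlen heps huniq hne).
Qed.
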